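(* Let $\mathcal H$ be a finite-dimensional Hilbert space, $U(t,s)$ a unitary evolution, $|\psi\rangle$ an initial pure state at time $t_0$, and for times $t_0<t_1<\dots<t_n$ let $\hat\sigma^{(k)}=\{|\phi^{(k)}_i\rangle\langle\phi^{(k)}_i|\}_i$, $k=1,\dots,n$, be sets of rank-1 projectors onto orthonormal bases of $\mathcal H$ (Schrödinger picture), with $|\phi^{(0)}\rangle:=|\psi\rangle$. Form the graph whose vertices at time $t_k$ are the basis vectors $|\phi^{(k)}_i\rangle$, with an edge between $|\phi^{(k)}_j\rangle$ and $|\phi^{(k+1)}_i\rangle$ iff the Green function $G^{ij}(t_{k+1},t_k)=\langle\phi^{(k+1)}_i|U(t_{k+1},t_k)|\phi^{(k)}_j\rangle$ is nonzero. A loop is the closed walk formed by two distinct forward-in-time paths $\alpha=(\alpha_1,\dots,\alpha_n)$, $\beta=(\beta_1,\dots,\beta_n)$ from $|\psi\rangle$ to the same final vertex ($\alpha_n=\beta_n$), and its product of Green functions is $\prod_{k=0}^{n-1}G^{\alpha_{k+1}\alpha_k}(t_{k+1},t_k)\cdot\prod_{k=0}^{n-1}\overline{G^{\beta_{k+1}\beta_k}(t_{k+1},t_k)}$ (with $\alpha_0=\beta_0$ the initial vertex; traversing an edge backward contributes the complex conjugate). If the product of Green functions around every loop is purely imaginary (zero counting as purely imaginary, so in particular the absence of loops suffices), then the family of fine-grained histories $\{|\psi\rangle\langle\psi|,\sigma^{(1)},\dots,\sigma^{(n)}\}$ is weakly consistent.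
   Context: Here $\sigma^{(k)}$ denotes the Heisenberg-picture version of $\hat\sigma^{(k)}$, i.e. the projectors $P^{(k)}_i=U(t_k,t_0)^\dagger|\phi^{(k)}_i\rangle\langle\phi^{(k)}_i|U(t_k,t_0)$. For a history $\alpha=(\alpha_1,\dots,\alpha_n)$ the history operator is $C_\alpha=P^{(1)}_{\alpha_1}\cdots P^{(n)}_{\alpha_n}$, its probability is $Pr(\alpha)=\mathrm{Tr}\{C_\alpha^\dagger\rho C_\alpha\}$ and the coherence function is $D(\alpha;\beta)=\mathrm{Tr}\{C_\alpha^\dagger\rho C_\beta\}$, with $\rho=|\psi\rangle\langle\psi|$. The family is weakly consistent if $\mathrm{Re}\,D(\alpha;\beta)=\delta_{\alpha\beta}Pr(\alpha)$ for all histories $\alpha,\beta$, where $\delta_{\alpha\beta}=\prod_k\delta_{\alpha_k\beta_k}$. *)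

(* Defs.v *)
(* Finite-dimensional Hilbert space = 'cV[R[i]]_d over the
   complex numbers R[i] of an arbitrary real closed field R (times live in R). *)
From HB Require Import structures.
From mathcomp Require Import all_boot all_order all_algebra.
From mathcomp Require Import complex.
Set Implicit Arguments. Unset Strict Implicit. Unset Printing Implicit Defensive.
Import Order.TTheory GRing.Theory Num.Theory.
Local Open Scope ring_scope.

Section QDefs.
Variable R : rcfType.
Local Notation C := R[i].

Definition adjmx (m n : nat) (A : 'M[C]_(m, n)) : 'M[C]_(n, m) :=
  (map_mx (fun z => z^*) A)^T.

Definition inner (d : nat) (u v : 'cV[C]_d) : C := (adjmx u *m v) 0 0.

Definition unitary_mx (d : nat) (A : 'M[C]_d) : Prop :=
  adjmx A *m A = 1%:M.

Definition unitary_evolution (d : nat) (U : R -> R -> 'M[C]_d) : Prop :=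
  (forall t s, unitary_mx (U t s)) /\
  (forall t, U t t = 1%:M) /\
  (forall t r s, U t s = U t r *m U r s).

Definition orthonormal_basis (d : nat) (e : 'I_d -> 'cV[C]_d) : Prop :=
  forall i j, inner (e i) (e j) = (i == j)%:R.

Definition rank1 (d : nat) (v : 'cV[C]_d) : 'M[C]_d := v *m adjmx v.

Variables (d n : nat) (U : R -> R -> 'M[C]_d) (t : 'I_n.+1 -> R)
  (psi : 'cV[C]_d) (phi : 'I_n -> 'I_d -> 'cV[C]_d).
(* phi k is the basis at time t_(k+1), k : 'I_n. *)

(* Heisenberg-picture projector P^(k+1)_i = U(t_{k+1},t_0)^† |phi><phi| U(t_{k+1},t_0) *)
Definition heis_proj (k : 'I_n) (i : 'I_d) : 'M[C]_d :=
  adjmx (U (t (lift ord0 k)) (t ord0)) *m rank1 (phi k i)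
        *m U (t (lift ord0 k)) (t ord0).

Definition history := {ffun 'I_n -> 'I_d}.

Definition history_op (a : history) : 'M[C]_d :=
  foldr (fun k M => heis_proj k (a k) *m M) 1%:M (enum 'I_n).

Definition rho : 'M[C]_d := rank1 psi.

Definition coherence (a b : history) : C :=
  \tr (adjmx (history_op a) *m rho *m history_op b).

Definition prob (a : history) : C := coherence a a.

Definition weakly_consistent : Prop :=
  forall a b : history, 'Re (coherence a b) = (a == b)%:R * prob a.

Definition vertex (a : history) (k : 'I_n.+1) : 'cV[C]_d :=
  match unlift ord0 k with
  | None => psi
  | Some k' => phi k' (a k')
  end.

Definition green (a : history) (k : 'I_n) : C :=
  inner (vertex a (lift ord0 k))
        (U (t (lift ord0 k)) (t (widen_ord (leqnSn n) k)) *m vertex a (widen_ord (leqnSn n) k)).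

Definition is_path (a : history) : Prop := forall k, green a k != 0.

Definition same_end (a b : history) : Prop :=
  forall k : 'I_n, k.+1 = n -> a k = b k.

Definition loop_product (a b : history) : C :=
  (\prod_(k < n) green a k) * (\prod_(k < n) green b k)^*.

Definition purely_imaginary (z : C) : Prop := 'Re z = 0.

End QDefs.

(* Main.v *)
Require Import Defs.
From HB Require Import structures.
From mathcomp Require Import all_boot all_order all_algebra.
From mathcomp Require Import complex.
Import Order.TTheory GRing.Theory Num.Theory.
Local Open Scope ring_scope.

Lemma adjmxM (R : rcfType) m n p (A : 'M[R[i]]_(m, n)) (B : 'M[R[i]]_(n, p)) :
  adjmx (A *m B) = adjmx B *m adjmx A.
Proof. by rewrite /adjmx map_mxM trmx_mul. Qed.

Lemma adjmxK (R : rcfType) m n (A : 'M[R[i]]_(m, n)) : adjmx (adjmx A) = A.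
Proof. by apply/matrixP => i j; rewrite /adjmx !mxE conjCK. Qed.

Lemma adjmxZ (R : rcfType) m n (c : R[i]) (A : 'M[R[i]]_(m, n)) :
  adjmx (c *: A) = c^* *: adjmx A.
Proof. by apply/matrixP => i j; rewrite /adjmx !mxE rmorphM. Qed.

Lemma adjmx1 (R : rcfType) m : adjmx (1%:M : 'M[R[i]]_m) = 1%:M.
Proof. by rewrite /adjmx map_mx1 trmx1. Qed.

Lemma adjmx11 (R : rcfType) (A : 'M[R[i]]_1) : adjmx A 0 0 = (A 0 0)^*.
Proof. by rewrite /adjmx !mxE. Qed.

Lemma mx11_mul (R : rcfType) d p (x : 'M[R[i]]_(1, d)) (y : 'M[R[i]]_(d, 1))
  (z : 'M[R[i]]_(1, p)) : x *m y *m z = (x *m y) 0 0 *: z.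
Proof. by rewrite {1}[x *m y]mx11_scalar mul_scalar_mx. Qed.

Lemma foldr_foldl (R : rcfType) d (I : Type) (F : I -> 'M[R[i]]_d) (s : seq I) m
   (w : 'M[R[i]]_(m, d)) :
  w *m foldr (fun k M => F k *m M) 1%:M s = foldl (fun w k => w *m F k) w s.
Proof.
elim: s w => [|x s IH] w /=; first by rewrite mulmx1.
by rewrite mulmxA IH.
Qed.

Lemma foldl_map' (A B C : Type) (f : A -> B -> A) (g : C -> B) (s : seq C) w :
  foldl f w (map g s) = foldl (fun w x => f w (g x)) w s.
Proof. by elim: s w => [|x s IH] w //=. Qed.

Lemma enum_inord N : enum 'I_N.+1 = [seq inord i | i <- iota 0 N.+1].
Proof.
apply: (inj_map val_inj); rewrite val_enum_ord -map_comp.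
rewrite -[LHS]map_id; apply/eq_in_map => x; rewrite mem_iota /= => hx.
by rewrite inordK.
Qed.

Lemma vertex_lift (R : rcfType) d n (psi : 'cV[R[i]]_d) (phi : 'I_n -> 'I_d -> 'cV[R[i]]_d)
  (b : history d n) k : vertex psi phi b (lift ord0 k) = phi k (b k).
Proof. by rewrite /vertex liftK. Qed.

Lemma vertex0 (R : rcfType) d n (psi : 'cV[R[i]]_d) (phi : 'I_n -> 'I_d -> 'cV[R[i]]_d)
  (b : history d n) : vertex psi phi b ord0 = psi.
Proof. by rewrite /vertex unlift_none. Qed.

Lemma W_formula (R : rcfType) d N (U : R -> R -> 'M[R[i]]_d) (t : 'I_N.+2 -> R)
  (psi : 'cV[R[i]]_d) (phi : 'I_N.+1 -> 'I_d -> 'cV[R[i]]_d)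
  (hU : unitary_evolution U) (b : history d N.+1) m : (m <= N)%N ->
  foldl (fun w k => w *m heis_proj U t phi (inord k) (b (inord k))) (adjmx psi) (iota 0 m.+1)
  = (\prod_(k < m.+1) (green U t psi phi b (inord k))^*) *:
      (adjmx (phi (inord m) (b (inord m))) *m U (t (lift ord0 (inord m))) (t ord0)).
Proof.
elim: m => [|m IH] hm.
  rewrite /= big_ord1 /heis_proj /rank1 !mulmxA -[LHS]mulmxA mx11_mul.
  congr (_ *: _).
  rewrite -adjmxM -[phi _ _ in LHS]adjmxK -adjmxM adjmx11; congr (_^*).
  rewrite /green /inner vertex_lift [widen_ord _ _](_ : _ = ord0) ?vertex0 ?mulmxA //.
  by apply: val_inj; rewrite /= inordK.
have hm' : (m <= N)%N by apply: ltnW.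
have -> : iota 0 m.+2 = rcons (iota 0 m.+1) m.+1 by rewrite -addn1 iotaD cats1.
rewrite foldl_rcons IH //.
set V0 := U (t (lift ord0 (inord m))) (t ord0).
set V1 := U (t (lift ord0 (inord m.+1))) (t ord0).
set G := U (t (lift ord0 (inord m.+1))) (t (lift ord0 (inord m))).
have hV : V1 = G *m V0 by rewrite /V1 /G /V0 (hU.2.2 _ (t (lift ord0 (inord m)))).
have hVV : V0 *m adjmx V0 = 1%:M by apply: mulmx1C; apply: hU.1.
rewrite /heis_proj -/V1 /rank1 -scalemxAl.
have hV1 : adjmx V1 = adjmx V0 *m adjmx G by rewrite hV adjmxM.
rewrite hV1 !mulmxA.
rewrite -[adjmx _ *m V0 *m adjmx V0]mulmxA hVV mulmx1.
set Z := _ *m V1.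
have -> : Z = (adjmx (phi (inord m) (b (inord m))) *m adjmx G *m phi (inord m.+1) (b (inord m.+1))) *m (adjmx (phi (inord m.+1) (b (inord m.+1))) *m V1).
  by rewrite /Z !mulmxA.
rewrite mx11_mul scalerA [in RHS]big_ord_recr /=.
congr (_ * _ *: _).
rewrite -adjmxM -[phi (inord m.+1) _ in LHS]adjmxK -adjmxM adjmx11; congr (_^*).
rewrite /green /inner vertex_lift [widen_ord _ _](_ : _ = lift ord0 (inord m)) ?vertex_lift ?mulmxA //.
by apply: val_inj; rewrite /= /bump /= !inordK //; apply: leqW.
Qed.

Lemma coh_formula (R : rcfType) d N (U : R -> R -> 'M[R[i]]_d) (t : 'I_N.+2 -> R)
  (psi : 'cV[R[i]]_d) (phi : 'I_N.+1 -> 'I_d -> 'cV[R[i]]_d)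
  (hU : unitary_evolution U) (hphi : forall k, orthonormal_basis (phi k))
  (a b : history d N.+1) :
  coherence U t psi phi a b =
  (\prod_(k < N.+1) green U t psi phi b k)^* * (\prod_(k < N.+1) green U t psi phi a k)
  * (b ord_max == a ord_max)%:R.
Proof.
set V := U (t (lift ord0 ord_max)) (t ord0).
have hN : (inord N : 'I_N.+1) = ord_max by apply: val_inj; rewrite /= inordK.
have hW x : adjmx psi *m history_op U t phi x =
   (\prod_(k < N.+1) (green U t psi phi x k)^*) *: (adjmx (phi ord_max (x ord_max)) *m V).
  rewrite /history_op foldr_foldl enum_inord foldl_map' (@W_formula R d N U t psi phi hU x N (leqnn N)) hN.
  by congr (_ *: _); apply: eq_bigr => k _; rewrite inord_val.
have hVV : V *m adjmx V = 1%:M by apply: mulmx1C; apply: hU.1.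
rewrite /coherence /rho /rank1 mulmxA.
rewrite -[adjmx _ *m psi *m adjmx psi *m _]mulmxA mxtrace_mulC trace_mx11.
have hA : adjmx (history_op U t phi a) *m psi = adjmx (adjmx psi *m history_op U t phi a).
  by rewrite adjmxM adjmxK.
rewrite hA !hW adjmxZ -scalemxAl -scalemxAr scalerA mxE.
rewrite adjmxM adjmxK mulmxA -[_ *m V *m adjmx V]mulmxA hVV mulmx1.
rewrite -/(inner _ _) hphi.
rewrite !rmorph_prod; congr (_ * _ * _).
by apply: eq_bigr => k _; exact: conjCK.
Qed.

Theorem theorem2 (R : rcfType) (d n : nat) (U : R -> R -> 'M[R[i]]_d)
  (t : 'I_n.+1 -> R) (psi : 'cV[R[i]]_d) (phi : 'I_n -> 'I_d -> 'cV[R[i]]_d) :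
  unitary_evolution U ->
  (forall k l : 'I_n.+1, (k < l)%N -> t k < t l) ->
  inner psi psi = 1 ->
  (forall k : 'I_n, orthonormal_basis (phi k)) ->
  (forall a b : history d n,
      is_path U t psi phi a -> is_path U t psi phi b ->
      a != b -> same_end a b ->
      purely_imaginary (loop_product U t psi phi a b)) ->
  weakly_consistent U t psi phi.
Proof.
move=> hU _ hpsi hphi hloop a b.
have Re_real (z : R[i]) : z \is Num.real -> 'Re z = z by move/Creal_ReP.
destruct n as [|N].
  have ha : a = b by apply/ffunP => -[].
  subst b.
  have hc : coherence U t psi phi a a = 1.
    rewrite /coherence /history_op.
    have -> : enum 'I_0 = [::] by apply/eqP; rewrite -size_eq0 size_enum_ord.
    rewrite /= adjmx1 mul1mx mulmx1 /rho /rank1 mxtrace_mulC trace_mx11.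
    exact: hpsi.
  by rewrite /prob hc eqxx mul1r Re_real // rpred1.
rewrite /prob !coh_formula //.
have [<-|hab] := eqVneq a b.
  rewrite eqxx mulr1 mul1r -normCKC Re_real //.
  by rewrite rpredX // normr_real.
rewrite mul0r.
have [hE|hE] := eqVneq (b ord_max) (a ord_max); last first.
  by rewrite mulr0 Re_real // rpred0.
rewrite mulr1.
have hse : same_end a b.
  move=> k hk; have -> : k = ord_max by apply: val_inj => /=; case: hk.
  by rewrite hE.
have [pa|npa] := boolP [forall k, green U t psi phi a k != 0]; last first.
  move/forallPn: npa => [k]; rewrite negbK => /eqP hk.
  have -> : \prod_(k < N.+1) green U t psi phi a k = 0.
    by rewrite (bigD1 k) //= hk mul0r.
  by rewrite mulr0 Re_real // rpred0.
have [pb|npb] := boolP [forall k, green U t psi phi b k != 0]; last first.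
  move/forallPn: npb => [k]; rewrite negbK => /eqP hk.
  have -> : \prod_(k < N.+1) green U t psi phi b k = 0.
    by rewrite (bigD1 k) //= hk mul0r.
  by rewrite rmorph0 mul0r Re_real // rpred0.
have := hloop a b (fun k => forallP pa k) (fun k => forallP pb k) hab hse.
by rewrite /purely_imaginary /loop_product mulrC.
Qed.
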